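(* Let $\langle B,\wedge,{}'\rangle$ be an algebra with $\wedge$ binary and ${}'$ unary satisfying $x\wedge y\approx y\wedge x$, $x\wedge(y\wedge z)\approx(x\wedge y)\wedge z$, $x''\approx x$, and $x'\approx (x\wedge y)'\wedge(x\wedge y')'$. Then for all $x,y\in B$: $x\wedge(x\wedge y')'=y\wedge(y\wedge x')'$. *)


Theorem lemma2p3 (B : Type) (meet : B -> B -> B) (c : B -> B)
  (comm : forall x y, meet x y = meet y x)
  (assoc : forall x y z, meet x (meet y z) = meet (meet x y) z)
  (invol : forall x, c (c x) = x)
  (ax : forall x y, c x = meet (c (meet x y)) (c (meet x (c y)))) :
  forall x y : B, meet x (c (meet x (c y))) = meet y (c (meet y (c x))).
Proof.
  intros x0 y0.
  assert (AC4 : forall a b d e, meet (meet a b) (meet d e) = meet (meet e b) (meet d a)).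
  { intros a b d e.
    assert (SW : forall p q r, meet p (meet q r) = meet q (meet p r)).
    { intros p q r. rewrite assoc, (comm p q), <- assoc. reflexivity. }
    rewrite <- !assoc. rewrite (SW a b), (SW a d), (SW e b), (SW e d), (comm a e).
    reflexivity. }
  assert (K : forall z w, meet z (c z) = meet w (c w)).
  { intros z w.
    pose proof (ax (c z) w) as Hz. rewrite invol in Hz.
    pose proof (ax z w) as Hzc.
    pose proof (ax (c w) z) as Hw. rewrite invol in Hw.
    pose proof (ax w z) as Hwc.
    try rewrite invol in Hzc; try rewrite invol in Hwc; try rewrite invol in Hz; try rewrite invol in Hw.
    transitivity (meet (meet (c (meet (c z) w)) (c (meet (c z) (c w))))
                       (meet (c (meet z w)) (c (meet z (c w))))).
    { f_equal; assumption. }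
    transitivity (meet (meet (c (meet (c w) z)) (c (meet (c w) (c z))))
                       (meet (c (meet w z)) (c (meet w (c z))))).
    2: { f_equal; symmetry; assumption. }
    rewrite AC4. rewrite (comm (c z) (c w)), (comm z w), (comm z (c w)), (comm (c z) w).
    reflexivity. }
  set (o := meet x0 (c x0)).
  assert (Ko : forall z, meet z (c z) = o) by (intro z; apply K).
  assert (H10 : meet (c o) o = o).
  { rewrite comm. apply Ko. }
  assert (H11 : meet (c o) (c o) = c o).
  { set (e := meet (c o) (c o)).
    assert (Hi : o = meet (c e) (c o)).
    { pose proof (ax (c o) (c o)) as H. rewrite invol in H.
      rewrite H10 in H. exact H. }
    assert (Hii : e = meet (c o) (c (meet (c e) o))).
    { pose proof (ax (c e) (c o)) as H. rewrite !invol in H.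
      rewrite <- Hi in H. exact H. }
    assert (Hiii : c o = meet (c (meet o (c e))) (c o)).
    { pose proof (ax o (c e)) as H. rewrite invol in H.
      replace (meet o e) with o in H. exact H.
      unfold e. rewrite assoc. rewrite (comm o (c o)), H10. rewrite comm. symmetry. apply H10. }
    rewrite Hii. rewrite (comm (c o)). rewrite (comm (c e) o). symmetry. exact Hiii. }
  assert (W1 : forall w, meet w (c o) = w).
  { intro w.
    pose proof (ax w (c o)) as H1. rewrite invol in H1.
    pose proof (ax (meet w (c o)) (c o)) as H2. rewrite invol in H2.
    rewrite <- !assoc in H2. rewrite H11, H10 in H2.
    rewrite <- H1 in H2.
    rewrite <- (invol (meet w (c o))), H2. apply invol. }
  assert (Id : forall w, meet w w = w).
  { intro w. pose proof (ax w w) as H. rewrite Ko, W1 in H.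
    rewrite <- (invol (meet w w)), <- H. apply invol. }
  assert (M0 : forall w, meet w o = o).
  { intro w. transitivity (meet w (meet w (c w))); [f_equal; symmetry; apply Ko|]. rewrite assoc, Id. apply Ko. }
  assert (T : forall x y, meet x (c (meet x (c y))) = meet x y).
  { intros x y.
    set (t := meet x (c (meet x (c y)))).
    assert (E1 : t = meet t y).
    { pose proof (ax t y) as H.
      replace (meet t (c y)) with o in H.
      rewrite W1 in H. apply (f_equal c) in H. rewrite !invol in H. exact H.
      unfold t. rewrite <- assoc, (comm _ (c y)), assoc. symmetry. apply Ko. }
    assert (E2 : meet x y = meet t y).
    { pose proof (ax (meet x y) (meet x (c y))) as H.
      replace (meet (meet x y) (meet x (c y))) with o in H.
      rewrite (comm (c o)), W1 in H.
      replace (meet t y) with (meet (meet x y) (c (meet x (c y)))).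
      apply (f_equal c) in H. rewrite !invol in H. exact H.
      unfold t. rewrite <- !assoc. f_equal. apply comm.
      rewrite <- !assoc. rewrite (assoc y x (c y)), (comm y x), <- (assoc x y), Ko.
      rewrite assoc, Id. symmetry. apply M0. }
    rewrite E2. exact E1. }
  rewrite !T. apply comm.
Qed.
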